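(* For every closed term $t$ over $\Sigma$, the term graph $\mathcal{G}(t)$ is constructor-shared. Moreover, if $G$ is a closed, constructor-shared term graph and $G\rightarrow I$ in the constructor graph rewrite system corresponding to a constructor rewrite system $R$ over $\Sigma$, then $I$ is constructor-shared.
   Context: A constructor rewrite system $R$ over a signature $\Sigma$ (symbols are constructors or function symbols, with arities) consists of rules $\mathbf{f}(p_1,\dots,p_n)\rightarrow t$ with $\mathbf{f}$ a function symbol, $p_i$ patterns (constructors and variables), assumed orthogonal (linear, non-overlapping left-hand sides). A labelled graph is $(V,\alpha,\delta)$: finite $V$, ordered successor lists $\alpha:V\to V^*$, partial labelling $\delta:V\rightharpoonup\Sigma$ with the number of successors equal to the arity of the label (0 if unlabelled), acyclic; it is closed if $\delta$ is total; a term graph additionally has a root; term graphs are taken up to isomorphism. Homomorphisms preserve labels and successor lists of labelled vertices (and root). A path is a constructor path if all its vertices are labelled by constructors; a left path if its first vertex is labelled by a function symbol and the others by constructors or unlabelled. A graph rewrite rule $(H,r,s)$ has every path from $r$ a left path. A redex in $G$: a rule with a homomorphism $\varphi:H|_r\to G$ ($H|_r$ = vertices reachable from $r$, root $r$) such that every path from $\varphi(v)$, for $v$ unlabelled in $H|_r$, is a constructor path. Firing: add a fresh copy of the vertices of $H$ reachable from $s$ but not from $r$ (successors in $H|_r$ replaced by their $\varphi$-images); redirect every edge into $\varphi(r)$, and the root if it is $\varphi(r)$, to the copy of $s$ (to $\varphi(s)$ if $s$ is reachable from $r$); remove vertices unreachable from the root; the result is $I$, written $G\rightarrow I$. $\mathcal{G}(t)$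 is the tree term graph with one vertex per symbol occurrence in $t$. A term rule $l\rightarrow r$ corresponds to the graph rule obtained from the disjoint union of the trees of $l$ and $r$ by identifying vertices of the same variable, left root = root of $l$, right root = root of $r$; the constructor graph rewrite system corresponding to $R$ is the set of these graph rules. A term graph is constructor-shared if whenever a vertex can be reached from the root by two distinct paths, every path starting at that vertex is a constructor path. *)

(* Defs.v *)
From Stdlib Require List.
From mathcomp Require Import all_boot.
Set Implicit Arguments.
Unset Strict Implicit.
Unset Printing Implicit Defensive.

Record signature := Signature {
  sym : Type;
  arity : sym -> nat;
  is_con : sym -> bool }.

Section Terms.
Variable S : signature.

Inductive term := Var of nat | App of sym S & seq term.

(* well-formed w.r.t. arities (a term "over Sigma") *)
Fixpoint wft (t : term) : bool :=
  match t with
  | Var _ => true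
  | App f ts => (size ts == arity f) && all wft ts
  end.

Fixpoint vars (t : term) : seq nat :=
  match t with
  | Var x => [:: x]
  | App _ ts => flatten (map vars ts)
  end.

Definition closed_term (t : term) : bool := wft t && (vars t == [::]).

Fixpoint is_pat (t : term) : bool :=
  match t with
  | Var _ => true
  | App f ts => is_con f && all is_pat ts
  end.

Fixpoint subst (sigma : nat -> term) (t : term) : term :=
  match t with
  | Var x => sigma x
  | App f ts => App f (map (subst sigma) ts)
  end.

(* positions (root-first lists of argument indices) of all symbol
   occurrences of t *)
Fixpoint pos (t : term) : seq (seq nat) :=
  match t with
  | Var _ => [:: [::]]
  | App _ ts =>
      [::] :: (fix aux (k : nat) (us : seq term) : seq (seq nat) :=
                 match us with
                 | [::] => [::]
                 | u :: us' => map (cons k) (pos u) ++ aux k.+1 us'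
                 end) 0 ts
  end.

Fixpoint subterm (t : term) (p : seq nat) : option term :=
  match p with
  | [::] => Some t
  | k :: p' =>
      match t with
      | Var _ => None
      | App _ ts => if k < size ts then subterm (nth (Var 0) ts k) p' else None
      end
  end.

Definition tlab (ot : option term) : option (sym S) :=
  if ot is Some (App f _) then Some f else None.

Definition nchildren (ot : option term) : nat :=
  if ot is Some (App _ ts) then size ts else 0.

Lemma nil_pos (t : term) : [::] \in pos t.
Proof. by case: t => [x|f ts] /=; rewrite in_cons eqxx. Qed.

(* Constructor rewrite system: a list of rules l -> r, with l = f(p1..pn),
   f a function symbol, pi patterns, all terms over Sigma, rules being
   rewrite rules (Var r included in Var l), orthogonal (left-linear and
   non-overlapping: no two distinct rules have left-hand sides with a
   common instance). *)
Definition crs (R : seq (term * term)) : Prop :=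
  (forall l r, List.In (l, r) R ->
     [/\ wft l, wft r,
         (exists f ps, l = App f ps /\ ~~ is_con f /\ all is_pat ps),
         uniq (vars l) & {subset vars r <= vars l}]) /\
  (forall i j, i < size R -> j < size R -> i <> j ->
     forall sigma1 sigma2 : nat -> term,
       subst sigma1 (nth (Var 0, Var 0) R i).1 <>
       subst sigma2 (nth (Var 0, Var 0) R j).1).

End Terms.

Record lgraph (S : signature) := LGraph {
  vtx : finType;
  succ : vtx -> seq vtx;
  lab : vtx -> option (sym S) }.

Record tgraph (S : signature) := TGraph {
  tg_graph : lgraph S;
  tg_root : vtx tg_graph }.

Record grule (S : signature) := GRule {
  gr_graph : lgraph S;
  gr_l : vtx gr_graph;
  gr_r : vtx gr_graph }.

Section Graphs.
Variable S : signature.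

Definition edge (G : lgraph S) : rel (vtx G) := grel (@succ S G).
Arguments edge : clear implicits.

Definition arity_of (o : option (sym S)) : nat :=
  if o is Some f then arity f else 0.

(* a path from v is a nonempty vertex sequence v :: p following edges *)
Definition wf_lgraph (G : lgraph S) : Prop :=
  (forall v : vtx G, size (succ v) = arity_of (lab v)) /\
  (forall v (p : seq (vtx G)), path (edge G) v p -> p != [::] -> last v p != v).

Definition is_termgraph (G : tgraph S) : Prop := wf_lgraph (tg_graph G).

Definition closed_graph (G : tgraph S) : Prop :=
  forall v : vtx (tg_graph G), lab v <> None.

Definition con_vertex (G : lgraph S) (v : vtx G) : bool :=
  if lab v is Some f then is_con f else false.

Definition con_path (G : lgraph S) (p : seq (vtx G)) : bool :=
  all (@con_vertex G) p.

Definition constructor_shared (G : tgraph S) : Prop :=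
  forall w : vtx (tg_graph G),
    (exists p1 p2 : seq (vtx (tg_graph G)),
        [/\ p1 != p2,
            path (edge _) (tg_root G) p1, last (tg_root G) p1 = w,
            path (edge _) (tg_root G) p2 & last (tg_root G) p2 = w]) ->
    forall p, path (edge _) w p -> con_path (w :: p).

Definition tg_iso (A B : tgraph S) : Prop :=
  exists f : vtx (tg_graph A) -> vtx (tg_graph B),
    [/\ bijective f,
        (forall v, lab (f v) = lab v),
        (forall v, succ (f v) = map f (succ v)) &
        f (tg_root A) = tg_root B].

(* homomorphism of labelled graphs from H|_r into G (phi is only relevant
   on the vertices of H reachable from r) *)
Definition is_hom_from_l (H : grule S) (G : tgraph S)
    (phi : vtx (gr_graph H) -> vtx (tg_graph G)) : Prop :=
  forall v, connect (edge _) (gr_l H) v ->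
    forall f, lab v = Some f ->
      lab (phi v) = Some f /\ succ (phi v) = map phi (succ v).

Definition is_redex (H : grule S) (G : tgraph S)
    (phi : vtx (gr_graph H) -> vtx (tg_graph G)) : Prop :=
  is_hom_from_l phi /\
  (forall v, connect (edge _) (gr_l H) v -> lab v = None ->
     forall p, path (edge _) (phi v) p -> con_path (phi v :: p)).

Section Fire.
Variables (H : grule S) (G : tgraph S)
          (phi : vtx (gr_graph H) -> vtx (tg_graph G)).

Definition newP : pred (vtx (gr_graph H)) := fun h =>
  connect (edge _) (gr_r H) h && ~~ connect (edge _) (gr_l H) h.

Definition NewV : finType := {h : vtx (gr_graph H) | newP h}.

Definition W : finType := (vtx (tg_graph G) + NewV)%type.

(* image of a vertex of H: its fresh copy if reachable from s but not
   from r, its phi-image otherwise (then it is in H|_r) *)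
Definition img (h : vtx (gr_graph H)) : W :=
  match (insub h : option NewV) with
  | Some u => inr u
  | None => inl (phi h)
  end.

Definition tgt : W := img (gr_r H).

Definition redir (x : W) : W :=
  if x == inl (phi (gr_l H)) then tgt else x.

Definition succW (x : W) : seq W :=
  match x with
  | inl v => map redir (map (@inl _ NewV) (succ v))
  | inr u => map redir (map img (succ (val u)))
  end.

Definition labW (x : W) : option (sym S) :=
  match x with
  | inl v => lab v
  | inr u => lab (val u)
  end.

Definition rootW : W := redir (inl (tg_root G)).

Definition reachW : pred W := fun x => connect (grel succW) rootW x.

Definition Vfin : finType := {x : W | reachW x}.

Definition succF (x : Vfin) : seq Vfin := pmap insub (succW (val x)).

Definition labF (x : Vfin) : option (sym S) := labW (val x).

Definition rootF : Vfin := exist _ rootW (connect0 _ _).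

Definition fire : tgraph S := @TGraph S (@LGraph S _ succF labF) rootF.

End Fire.

End Graphs.

Section Translation.
Variable S : signature.

Definition tree_vtx (t : term S) : finType := seq_sub (pos t).

Definition tree_succ (t : term S) (p : tree_vtx t) : seq (tree_vtx t) :=
  pmap insub [seq rcons (val p) k | k <- iota 0 (nchildren (subterm t (val p)))].

Definition tree_lab (t : term S) (p : tree_vtx t) : option (sym S) :=
  tlab (subterm t (val p)).

Definition tree_root (t : term S) : tree_vtx t := SeqSub (nil_pos t).

Definition tree_graph (t : term S) : tgraph S :=
  @TGraph S (@LGraph S _ (@tree_succ t) (@tree_lab t)) (tree_root t).

(* vertex names of the rule graph: inl (true, p) = non-variable position p
   of l, inl (false, p) = non-variable position p of r, inr x = the
   (single, shared) vertex of variable x *)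
Definition rname : choiceType := ((bool * seq nat) + nat)%type.

Definition side (l r : term S) (b : bool) : term S := if b then l else r.

Definition nm (b : bool) (t : term S) (p : seq nat) : rname :=
  if subterm t p is Some (Var x) then inr x else inl (b, p).

Definition rnodes (l r : term S) : seq rname :=
  map (nm true l) (pos l) ++ map (nm false r) (pos r).

Definition rule_vtx (l r : term S) : finType := seq_sub (rnodes l r).

Definition rule_lab (l r : term S) (x : rule_vtx l r) : option (sym S) :=
  match val x with
  | inl (b, p) => tlab (subterm (side l r b) p)
  | inr _ => None
  end.

Definition rule_succ (l r : term S) (x : rule_vtx l r) : seq (rule_vtx l r) :=
  match val x with
  | inl (b, p) =>
      pmap insub [seq nm b (side l r b) (rcons p k)
                 | k <- iota 0 (nchildren (subterm (side l r b) p))]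
  | inr _ => [::]
  end.

Lemma rnodes_l (l r : term S) : nm true l [::] \in rnodes l r.
Proof. by rewrite mem_cat (map_f _ (nil_pos l)). Qed.

Lemma rnodes_r (l r : term S) : nm false r [::] \in rnodes l r.
Proof. by rewrite mem_cat (map_f _ (nil_pos r)) orbT. Qed.

Definition rule_graph (l r : term S) : grule S :=
  @GRule S (@LGraph S _ (@rule_succ l r) (@rule_lab l r))
        (SeqSub (rnodes_l l r)) (SeqSub (rnodes_r l r)).

Definition gstep (R : seq (term S * term S)) (G I : tgraph S) : Prop :=
  exists l r, List.In (l, r) R /\
    exists phi : vtx (gr_graph (rule_graph l r)) -> vtx (tg_graph G),
      is_redex phi /\ tg_iso (fire phi) I.

End Translation.

(* Main.v *)
Require Import Defs.
From mathcomp Require Import all_boot.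
Set Implicit Arguments. Unset Strict Implicit. Unset Printing Implicit Defensive.

Section Gen.
Variable S : signature.

Definition badv (T : tgraph S) (w : vtx (tg_graph T)) : Prop :=
  exists p, path (@edge S _) w p /\ ~~ con_path (w :: p).

Lemma cs_gen (T : tgraph S) :
  (forall w x1 x2 : vtx (tg_graph T), badv w -> edge x1 w -> edge x2 w -> x1 = x2) ->
  (forall x, badv (tg_root T) -> ~~ edge x (tg_root T)) ->
  constructor_shared T.
Proof.
move=> H1 H2.
suff key : forall n w (p1 p2 : seq (vtx (tg_graph T))), size p1 + size p2 <= n ->
  badv w -> p1 != p2 -> path (@edge S _) (tg_root T) p1 -> last (tg_root T) p1 = w ->
  path (@edge S _) (tg_root T) p2 -> last (tg_root T) p2 = w -> False.
  move=> w [p1 [p2 [neq P1 L1 P2 L2]]] p Pp.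
  apply/negPn/negP => Hnc.
  exact: (key _ w p1 p2 (leqnn _) (ex_intro _ p (conj Pp Hnc)) neq P1 L1 P2 L2).
elim=> [|n IH] w p1 p2 Hn Hb neq P1 L1 P2 L2.
  move: Hn; rewrite leqn0 addn_eq0 !size_eq0 => /andP[/eqP E1 /eqP E2].
  by rewrite E1 E2 eqxx in neq.
case/lastP: p1 neq P1 L1 Hn => [|q1 a1] neq P1 L1 Hn;
  case/lastP: p2 neq P2 L2 Hn => [|q2 a2] neq P2 L2 Hn.
- by rewrite eqxx in neq.
- move: L1 => /= L1; rewrite -L1 in L2 Hb.
  move: P2; rewrite rcons_path => /andP[_ E]. rewrite last_rcons in L2. rewrite L2 in E.
  by move: (H2 (last (tg_root T) q2) Hb); rewrite E.
- move: L2 => /= L2; rewrite -L2 in L1 Hb.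
  move: P1; rewrite rcons_path => /andP[_ E]. rewrite last_rcons in L1. rewrite L1 in E.
  by move: (H2 (last (tg_root T) q1) Hb); rewrite E.
- rewrite !last_rcons in L1 L2; subst a1 a2.
  move: P1 P2; rewrite !rcons_path => /andP[Q1 E1] /andP[Q2 E2].
  have ex := H1 _ _ _ Hb E1 E2.
  apply: (IH (last (tg_root T) q1) q1 q2) => //.
  + by move: Hn; rewrite !size_rcons addSn addnS ltnS => /ltnW.
  + case: Hb => p [Pp Hnp]; exists (w :: p); split; first by rewrite /= E1.
    apply: contra Hnp; rewrite /con_path /=. by case/andP.
  + by apply: contraNneq neq => ->.
Qed.

Lemma tree_cs (t : term S) : constructor_shared (tree_graph t).
Proof.
have Ed : forall x y : vtx (tg_graph (tree_graph t)), edge x y ->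
    exists k, val y = rcons (val x) k.
  move=> x y; rewrite /edge /= /grel /= /tree_succ mem_pmap_sub.
  by case/mapP => k _ ->; exists k.
apply: cs_gen => [w x1 x2 _ /Ed [k1 E1] /Ed [k2 E2]|x _].
  apply: val_inj; rewrite E1 in E2.
  by case: (rcons_inj E2).
apply/negP => /Ed [k E]. by move: E; rewrite /= ; case: (val x).
Qed.

End Gen.


Section TermL.
Variable S : signature.

Lemma subterm_rcons (t : term S) p k :
  subterm t (rcons p k) =
  match subterm t p with
  | Some (App _ ts) => if k < size ts then Some (nth (Var _ 0) ts k) else None
  | _ => None end.
Proof.
elim: p t => [|k' p IH] [x|f ts] //=.
by case: ifP.
Qed.

Definition paux := fix aux (k : nat) (us : seq (term S)) : seq (seq nat) :=
                 match us with
                 | [::] => [::]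
                 | u :: us' => map (cons k) (pos u) ++ aux k.+1 us'
                 end.

Lemma posApp f ts : pos (App f ts) = [::] :: paux 0 ts.
Proof. by []. Qed.

Lemma paux_mem j ts k p : k < size ts -> p \in pos (nth (Var _ 0) ts k) ->
  (j + k) :: p \in paux j ts.
Proof.
elim: ts j k => [|u us IH] j [|k] //= Hk Hp.
  by rewrite mem_cat addn0 (map_f _ Hp).
by rewrite mem_cat -addSnnS IH ?orbT.
Qed.

Lemma subterm_pos (t : term S) p : subterm t p <> None -> p \in pos t.
Proof.
elim: p t => [|k p IH] t; first by rewrite nil_pos.
case: t => [x|f ts] //.
rewrite posApp /=.
case: ifP => // Hk /IH Hp.
by rewrite in_cons (paux_mem 0 Hk Hp) orbT.
Qed.

Lemma subterm_vars (t u : term S) p : subterm t p = Some u -> {subset vars u <= vars t}.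
Proof.
elim: p t => [|k p IH] t /=; first by case=> ->.
case: t => [x|f ts] //=.
case: ifP => // Hk /IH Hs x /Hs Hx.
apply/flattenP; exists (vars (nth (Var _ 0) ts k)) => //.
rewrite -(nth_map _ [::]) //; apply: mem_nth; by rewrite size_map.
Qed.

Fixpoint term_ind2 (P : term S -> Prop) (HV : forall x, P (Var _ x))
  (HA : forall f ts, List.Forall P ts -> P (App f ts)) (t : term S) : P t :=
  match t with
  | Var x => HV x
  | App f ts => HA f ts ((fix G ts := match ts return List.Forall P ts with
                  | [::] => List.Forall_nil _
                  | u :: us => List.Forall_cons _ (term_ind2 HV HA u) (G us) end) ts)
  end.

Lemma vars_pos (t : term S) x : x \in vars t -> exists p, subterm t p = Some (Var _ x).
Proof.
elim/term_ind2: t => [y|f ts IH] /=.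
  by rewrite inE => /eqP ->; exists [::].
move=> Hx.
suff : exists k p, k < size ts /\ subterm (nth (Var _ 0) ts k) p = Some (Var _ x).
  by case=> k [p [Hk Hp]]; exists (k :: p); rewrite /= Hk.
elim: IH Hx => [|u us Pu _ IH2] //=.
rewrite mem_cat => /orP[/Pu [p Hp]|/IH2 [k [p [Hk Hp]]]].
  by exists 0, p.
by exists k.+1, p.
Qed.

End TermL.


Lemma edgeE S (T : lgraph S) (x y : vtx T) : edge x y = (y \in succ x).
Proof. by []. Qed.

Lemma path_closed (T : Type) (e : rel T) (P : T -> Prop) :
  (forall x y, e x y -> P x -> P y) -> forall x p, path e x p -> P x -> P (last x p).
Proof.
move=> HP x p; elim: p x => [|y p IH] x //= /andP[Exy Pp] Px.
exact: IH Pp (HP _ _ Exy Px).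
Qed.

Lemma nm_inl S b (t : term S) p b' q : nm b t p = inl (b', q) -> b = b' /\ p = q.
Proof. rewrite /nm; case: (subterm t p) => [[x|g ts]|] //; by case=> -> ->. Qed.

Section Main.
Variable S : signature.
Variables (l r : term S) (f0 : sym S) (ps0 : seq (term S)).
Hypothesis hl : l = App f0 ps0.
Hypothesis hcon : ~~ is_con f0.
Hypothesis hvars : {subset vars r <= vars l}.

Local Notation HH := (rule_graph l r).
Local Notation VH := (vtx (gr_graph HH)).
Local Notation lH := (gr_l HH).
Local Notation sH := (gr_r HH).
Local Notation eH := (@edge S (gr_graph HH)).

Lemma Hsucc (x y : VH) : eH x y -> exists b p k, val x = inl (b,p) /\
   val y = nm b (side l r b) (rcons p k) /\ k < nchildren (subterm (side l r b) p).
Proof.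
rewrite edgeE /= /rule_succ. case E: (val x) => [[b p]|z] //.
rewrite mem_pmap_sub => /mapP [k]. rewrite mem_iota => /andP[_ Hk] ->.
by exists b, p, k; rewrite add0n in Hk.
Qed.

Lemma Hnil (x : VH) : lab x = None -> succ x = [::].
Proof.
rewrite /= /rule_lab /rule_succ. case: (val x) => [[b p]|z] //.
by case: (subterm (side l r b) p) => [[y|g ts]|].
Qed.

Lemma Hclosed b (x y : VH) : eH x y ->
  (exists p, val x = nm b (side l r b) p /\ subterm (side l r b) p <> None) ->
  exists p, val y = nm b (side l r b) p /\ subterm (side l r b) p <> None.
Proof.
move=> /Hsucc [b' [p' [k [Ex [Ey Hk]]]]] [p [Ex' Hs]].
rewrite Ex' in Ex. have [Eb Ep] := nm_inl Ex. subst b' p'.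
move: Ex Hk Hs; rewrite /nm. case E: (subterm (side l r b) p) => [[z|g ts]|] // _ /= Hk _.
exists (rcons p k); split => //. by rewrite subterm_rcons E Hk.
Qed.

Lemma Hreach_l (h : VH) : connect eH lH h -> exists p, val h = nm true l p /\ subterm l p <> None.
Proof.
move/connectP => [q Pq ->]. apply: (path_closed (@Hclosed true)) Pq _.
by exists [::].
Qed.

Lemma Hreach_s (h : VH) : connect eH sH h -> exists p, val h = nm false r p /\ subterm r p <> None.
Proof.
move/connectP => [q Pq ->]. apply: (path_closed (@Hclosed false)) Pq _.
by exists [::].
Qed.

Lemma both_none (h : VH) : connect eH lH h -> connect eH sH h -> lab h = None.
Proof.
move=> /Hreach_l [p [Ep _]] /Hreach_s [q [Eq _]].
have Eh : nm true l p = nm false r q by rewrite -Ep -Eq.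
rewrite /= /rule_lab Ep. move: Eh; rewrite /nm.
case: (subterm l p) => [[x|g ts]|]; case: (subterm r q) => [[y|g' us]|] //= E; congruence.
Qed.

Lemma lH_lab : lab lH = Some f0.
Proof. by rewrite /= /rule_lab /= hl. Qed.

Lemma reach_build p : subterm l p <> None -> exists h : VH, val h = nm true l p /\ connect eH lH h.
Proof.
elim/last_ind: p => [|q k IH] Hs.
  by exists lH; split => //; exact: connect0.
move: Hs; rewrite subterm_rcons. case E: (subterm l q) => [[x|g ts]|] //. case: ifP => // Hk _.
have Hq : subterm l q <> None by rewrite E.
have [h0 [E0 C0]] := IH Hq.
have E0' : val h0 = inl (true, q) by rewrite E0 /nm E.
have Hm : nm true l (rcons q k) \in rnodes l r.
  rewrite mem_cat; apply/orP; left; apply: map_f; apply: subterm_pos.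
  by rewrite subterm_rcons E Hk.
exists (SeqSub Hm); split => //. apply: connect_trans C0 (connect1 _).
rewrite edgeE /= /rule_succ E0' mem_pmap_sub /= E /=.
by apply: map_f; rewrite mem_iota add0n Hk.
Qed.

Lemma new_inl (h : VH) : newP h -> exists q, val h = inl (false, q).
Proof.
case/andP => Cs Ncl. have [q [Eq Hq]] := Hreach_s Cs. move: Eq; rewrite /nm.
case E: (subterm r q) => [[x|g ts]|] Eq; try by exists q.
  have Hx : x \in vars l by apply: hvars; apply: (subterm_vars E); rewrite inE.
  have [p Hp] := vars_pos Hx.
  have Hp' : subterm l p <> None by rewrite Hp.
  have [h' [Eh' Ch']] := reach_build Hp'.
  have Ehh : h = h'. apply: val_inj. by rewrite Eq Eh' /nm Hp.
  by rewrite Ehh Ch' in Ncl.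
Qed.

Lemma no_s_succ (y : VH) : newP sH -> ~ eH y sH.
Proof.
move=> Hn Hs. have [q Eq] := new_inl Hn.
have [b [p [k [_ [Ey _]]]]] := Hsucc Hs.
rewrite Eq in Ey. have [_ E1] := nm_inl (esym Ey).
have [_ E2] := nm_inl (Eq : nm false r [::] = _).
by move: E1; rewrite -E2 => /(congr1 size); rewrite size_rcons.
Qed.


Variable G : tgraph S.
Hypothesis hacy : forall v (p : seq (vtx (tg_graph G))), path (@edge S _) v p -> p != [::] -> last v p != v.
Hypothesis hcs : constructor_shared G.
Variable phi : VH -> vtx (tg_graph G).
Hypothesis hred : is_redex phi.

Local Notation VG := (vtx (tg_graph G)).
Local Notation eG := (@edge S (tg_graph G)).
Local Notation WW := (W HH G).
Local Notation eW := (grel (succW phi)).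

Definition goodG (v : VG) := forall p, path eG v p -> con_path (v :: p).
Definition conW (x : WW) := if labW x is Some f then is_con f else false.
Definition goodW (x : WW) := forall p, path eW x p -> all conW (x :: p).

Lemma phil_lab : lab (phi lH) = Some f0.
Proof. exact: (hred.1 lH (connect0 _ _) f0 lH_lab).1. Qed.

Lemma phil_bad : ~ goodG (phi lH).
Proof. move=> /(_ [::] erefl). by rewrite /con_path /= /con_vertex phil_lab (negbTE hcon). Qed.

Lemma hom_path (h : VH) : connect eH lH h -> connect eG (phi lH) (phi h).
Proof.
move/connectP=> [q Pq ->].
suff : forall x, connect eH lH x -> path eH x q -> connect eG (phi x) (phi (last x q)).
  by apply; [exact: connect0|].
elim: q {Pq} => [|y q IH] x Cx /=; first by move=> _; exact: connect0.
case/andP => Exy Pq.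
have Cy : connect eH lH y := connect_trans Cx (connect1 Exy).
apply: connect_trans (IH y Cy Pq). apply: connect1.
case Lx: (lab x) => [g|].
  have [_ Sx] := hred.1 x Cx g Lx. rewrite edgeE Sx. apply: map_f. exact Exy.
by move: Exy; rewrite edgeE (Hnil Lx).
Qed.

Lemma img_old h : ~~ newP h -> img phi h = inl (phi h).
Proof. by move=> Hn; rewrite /img insubF //; exact: negbTE. Qed.

Lemma img_new h (Hh : newP h) : img phi h = inr (Sub h Hh).
Proof. by rewrite /img (insubT _ Hh). Qed.

Lemma old_good h : connect eH sH h -> ~~ newP h -> connect eH lH h /\ goodG (phi h).
Proof.
move=> Cs Hn.
have Cl : connect eH lH h by move: Hn; rewrite /newP Cs /= negbK.
split => //. exact: (hred.2 h Cl (both_none Cl Cs)).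
Qed.

Lemma old_succ_good (u : NewV HH) h : h \in succ (val u) -> ~~ newP h ->
  connect eH lH h /\ goodG (phi h).
Proof.
move=> Hh Hn. apply: old_good Hn.
have := valP u; case/andP => Cu _.
apply: connect_trans Cu (connect1 _). by rewrite edgeE.
Qed.

Lemma tgtP : (exists u, tgt phi = inr u /\ val u = sH) \/ (exists v, tgt phi = inl v /\ goodG v).
Proof.
rewrite /tgt. case Hn: (newP sH).
  by left; exists (Sub sH Hn); rewrite (img_new Hn) SubK.
right; exists (phi sH); rewrite img_old ?Hn //; split => //.
exact: (old_good (connect0 _ _) (negbT Hn)).2.
Qed.

Lemma good_inl v : goodG v -> goodW (inl v).
Proof.
move=> Gv p; elim: p v Gv => [|y p IH] v Gv /=.
  by move=> _; move: (Gv [::] erefl); rewrite /con_path /=.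
case/andP => Ey Pp.
move: Ey; rewrite /= /succW; case/mapP => y' /mapP [v' Hv' ->] Ey.
have Cv : con_vertex v && con_vertex v'.
  have P1 : path eG v [:: v'] by rewrite /= edgeE Hv'.
  by move: (Gv [:: v'] P1); rewrite /con_path /= andbT.
have Gv' : goodG v'.
  move=> q Pq; have := Gv (v' :: q); rewrite /= edgeE Hv' Pq => /(_ erefl).
  by case/andP.
have Ey' : y = inl v'.
  rewrite Ey /redir; case: eqP => [[E]|//].
  by move: Cv; rewrite E (_ : con_vertex (phi lH) = false) ?andbF // /con_vertex phil_lab (negbTE hcon).
subst y. case/andP: Cv => Cv _.
rewrite Ey' in Pp *. have := IH v' Gv' Pp; rewrite /= => ->; rewrite andbT; exact: Cv.
Qed.

Definition piW (x : WW) : VG := match x with inl v => v | inr _ => phi lH end.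

Lemma Ptgt : connect eG (phi lH) (piW (tgt phi)).
Proof.
rewrite /tgt; case Hn: (newP sH).
  by rewrite (img_new Hn) /=; exact: connect0.
rewrite img_old ?Hn //=. apply: hom_path.
exact: (old_good (connect0 _ _) (negbT Hn)).1.
Qed.

Lemma pi_edge x y : eW x y -> connect eG (piW x) (piW y).
Proof.
case: x => [v|u] /=.
  case/mapP => y' /mapP [v' Hv' ->] ->. rewrite /redir; case: eqP => [[E]|_] /=.
    apply: connect_trans Ptgt. apply: connect1; by rewrite edgeE -E.
  by apply: connect1; rewrite edgeE.
case/mapP => y' /mapP [h Hh ->] ->. rewrite /redir; case: eqP => [_|_].
  exact: Ptgt.
case Hn: (@newP S HH h).
  by rewrite (img_new Hn) /=; exact: connect0.
rewrite img_old ?Hn //=. apply: hom_path. exact: (@old_succ_good u h Hh (negbT Hn)).1.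
Qed.

Lemma reach_pi x : reachW phi x -> connect eG (tg_root G) (piW x).
Proof.
move/connectP => [q Pq ->].
apply: (path_closed (P := fun x => connect eG (tg_root G) (piW x))) Pq _.
  move=> a b Eab Ca; exact: connect_trans Ca (pi_edge Eab).
rewrite /rootW /redir; case: eqP => [[E]|_] /=; last exact: connect0.
rewrite E; exact: Ptgt.
Qed.

Lemma pred_inl (x : WW) v'' : eW x (inl v'') -> ~ goodW (inl v'') ->
  exists v, x = inl v /\ v'' \in succ v.
Proof.
have Htgt : tgt phi = inl v'' -> ~ goodW (inl v'') -> False.
  case: tgtP => [[u [-> _]] //|[v0 [-> Gv]] [E]]. by rewrite -E; apply; apply: good_inl.
case: x => [v|u] /=.
  case/mapP => y' /mapP [v' Hv' ->]. rewrite /redir; case: eqP => [_ Et|_ [->]] Hb.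
    by case: (Htgt (esym Et) Hb).
  by exists v.
case/mapP => y' /mapP [h Hh ->]. rewrite /redir; case: eqP => [_ Et|_ E] Hb.
  by case: (Htgt (esym Et) Hb).
case Hn: (@newP S HH h).
  by rewrite (img_new Hn) in E.
rewrite img_old ?Hn // in E. case: E => Ev. case: Hb; rewrite Ev; apply: good_inl.
exact: (@old_succ_good u h Hh (negbT Hn)).2.
Qed.

Lemma pred_inr (x : WW) u : eW x (inr u) ->
  (exists v, x = inl v /\ phi lH \in succ v /\ tgt phi = inr u) \/
  (exists u', x = inr u' /\ eH (val u') (val u)).
Proof.
case: x => [v|u'] /=.
  case/mapP => y' /mapP [v' Hv' ->]. rewrite /redir; case: eqP => [[E] Et|//].
  by left; exists v; rewrite -E.
case/mapP => y' /mapP [h Hh ->]. rewrite /redir; case: eqP => [E Et|_ E].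
  exfalso. case Hn: (@newP S HH h).
    by rewrite (img_new Hn) in E.
  rewrite img_old ?Hn // in E. case: E => E.
  apply: phil_bad; rewrite -E. exact: (@old_succ_good u' h Hh (negbT Hn)).2.
case Hn: (@newP S HH h).
  rewrite (img_new Hn) in E. case: E => Eu. right; exists u'; split => //.
  have -> : sval u = h by rewrite Eu.
  exact: Hh.
by rewrite img_old ?Hn in E.
Qed.

Lemma shared_good (v1 v2 w : VG) : connect eG (tg_root G) v1 -> connect eG (tg_root G) v2 ->
  w \in succ v1 -> w \in succ v2 -> v1 != v2 -> goodG w.
Proof.
move=> /connectP [q1 P1 L1] /connectP [q2 P2 L2] S1 S2 ne p Pp.
apply: (hcs _ Pp). exists (rcons q1 w), (rcons q2 w); split.
- apply: contraNneq ne => /rcons_inj [E]. by rewrite L1 L2 E.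
- by rewrite rcons_path P1 -L1 edgeE.
- by rewrite last_rcons.
- by rewrite rcons_path P2 -L2 edgeE.
- by rewrite last_rcons.
Qed.

Lemma no_cycle v : connect eG (tg_root G) v -> ~ (tg_root G \in succ v).
Proof.
move=> /connectP [q Pq Lq] Hs.
have Hp : path eG (tg_root G) (rcons q (tg_root G)) by rewrite rcons_path Pq -Lq edgeE.
have Hne : rcons q (tg_root G) != [::] by rewrite -size_eq0 size_rcons.
have := hacy Hp Hne. by rewrite last_rcons eqxx.
Qed.

Lemma W_uniq (w x1 x2 : WW) : reachW phi x1 -> reachW phi x2 -> ~ goodW w ->
  eW x1 w -> eW x2 w -> x1 = x2.
Proof.
case: w => [v''|u] R1 R2 Hb E1 E2.
  have [v1 [Ex1 S1]] := pred_inl E1 Hb. have [v2 [Ex2 S2]] := pred_inl E2 Hb. subst x1 x2.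
  case: (v1 =P v2) => [->//|/eqP ne]. exfalso; apply: Hb; apply: good_inl.
  exact: (shared_good (reach_pi R1) (reach_pi R2) S1 S2 ne).
case: (tgt phi =P inr u) => [Et|Nt].
  have Hu : val u = sH.
    case: tgtP => [[u0 [Et0 Hu0]]|[v0 [Et0 _]]]; rewrite Et0 in Et; last by [].
    by case: Et => <-.
  have Hn : newP sH by rewrite -Hu; exact: valP u.
  have Hx : forall x, reachW phi x -> eW x (inr u) ->
      exists v, x = inl v /\ phi lH \in succ v /\ connect eG (tg_root G) v.
    move=> x Rx Ex; case: (pred_inr Ex) => [[v [Exv [Sv _]]]|[u' [_ Eu']]].
      exists v; split => //; split => //. by have := reach_pi Rx; rewrite Exv.
    by case: (no_s_succ (y := val u') Hn); rewrite -Hu; exact: Eu'.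
  have [v1 [? [S1 R1']]] := Hx _ R1 E1; have [v2 [? [S2 R2']]] := Hx _ R2 E2; subst x1 x2.
  case: (v1 =P v2) => [->//|/eqP ne]. exfalso; apply: phil_bad.
  exact: shared_good R1' R2' S1 S2 ne.
have Hx : forall x, eW x (inr u) -> exists u' b p k, x = inr u' /\
    val (val u') = inl (b,p) /\ val (val u) = inl (b, rcons p k).
  move=> x Ex; case: (pred_inr Ex) => [[v [_ [_ Et]]]|[u' [Exu Eu']]]; first by case: Nt.
  have [b [p [k [Ev [Eu _]]]]] := Hsucc Eu'.
  have [q Eq] := new_inl (valP u).
  rewrite Eq in Eu. have [Eb Ep] := nm_inl (esym Eu).
  exists u', b, p, k; split => //; split => //. by rewrite Eq Eb Ep.
have [u1 [b1 [p1 [k1 [? [Ev1 Eu1]]]]]] := Hx _ E1.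
have [u2 [b2 [p2 [k2 [? [Ev2 Eu2]]]]]] := Hx _ E2; subst x1 x2.
rewrite Eu1 in Eu2; case: Eu2 => Eb /rcons_inj [Ep _].
congr inr; apply: val_inj; apply: val_inj. by rewrite Ev1 Ev2 Eb Ep.
Qed.

Lemma W_root x : reachW phi x -> ~ goodW (rootW phi) -> ~~ eW x (rootW phi).
Proof.
move=> Rx Hb; apply/negP => Ex. move: Hb Ex. rewrite /rootW /redir.
case: eqP => [[E]|_] Hb Ex.
  case: tgtP Hb Ex => [[u0 [-> Hu0]]|[v0 [-> Gv]]] Hb Ex; last by apply: Hb; exact: good_inl.
  case: (pred_inr Ex) => [[v [Exv [Sv _]]]|[u' [_ Eu']]].
    apply: (no_cycle (v := v)); last by rewrite E. by have := reach_pi Rx; rewrite Exv.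
  have Hn : newP sH by rewrite -Hu0; exact: valP u0.
  by apply: (no_s_succ (y := val u') Hn); rewrite -Hu0.
have [v [Exv Sv]] := pred_inl Ex Hb.
apply: (no_cycle (v := v)) Sv. by have := reach_pi Rx; rewrite Exv.
Qed.

Lemma bad_fire (w : vtx (tg_graph (fire phi))) : badv w -> ~ goodW (val w).
Proof.
case=> p [Pp Hn] Gw. move: Hn; apply/negP/negPn.
have Pp' : path eW (val w) (map val p).
  rewrite path_map. apply: sub_path Pp => a b. by rewrite edgeE /= /succF mem_pmap_sub.
move: (Gw _ Pp'). rewrite -map_cons all_map. by [].
Qed.

Lemma fire_cs : constructor_shared (fire phi).
Proof.
apply: cs_gen => [w x1 x2 Bw E1 E2|x Br].
  apply: val_inj; apply: (W_uniq (valP x1) (valP x2) (bad_fire Bw)).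
    by move: E1; rewrite edgeE /= /succF mem_pmap_sub.
  by move: E2; rewrite edgeE /= /succF mem_pmap_sub.
have := W_root (valP x) (bad_fire Br). by rewrite edgeE /= /succF mem_pmap_sub.
Qed.

End Main.


Lemma cs_iso S (A B : tgraph S) : constructor_shared A -> tg_iso A B -> constructor_shared B.
Proof.
move=> hA [f [[g fK gK] Hl Hs Hr]].
have Ef : forall x y, edge (f x) (f y) = edge x y.
  move=> x y; rewrite !edgeE Hs mem_map //; exact: can_inj fK.
have Pf : forall x q, path (@edge S _) (f x) (map f q) = path (@edge S _) x q.
  move=> x q; rewrite path_map; apply: eq_path => a b /=; exact: Ef.
have Cf : forall q, con_path (map f q) = con_path q.
  move=> q; rewrite /con_path all_map; apply: eq_all => a /=.
  by rewrite /con_vertex Hl.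
have Mg : forall q, map f (map g q) = q.
  by move=> q; rewrite -map_comp (eq_map gK) map_id.
have gR : g (tg_root B) = tg_root A by rewrite -Hr fK.
move=> w [p1 [p2 [neq P1 L1 P2 L2]]] p Pp.
have : con_path (g w :: map g p).
  apply: (hA (g w)).
    exists (map g p1), (map g p2); split.
    - apply: contraNneq neq => E. by rewrite -(Mg p1) E Mg.
    - by rewrite -gR -Pf gK Mg.
    - by rewrite -gR last_map L1.
    - by rewrite -gR -Pf gK Mg.
    - by rewrite -gR last_map L2.
  by rewrite -Pf gK Mg.
by rewrite -Cf /= gK Mg.
Qed.

Theorem lemma10 (S : signature) :
  (forall t : term S, closed_term t -> constructor_shared (tree_graph t)) /\
  (forall (R : seq (term S * term S)) (G I : tgraph S),
      crs R -> is_termgraph G -> closed_graph G -> constructor_shared G ->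
      gstep R G I -> constructor_shared I).
Proof.
split; first by move=> t _; exact: tree_cs.
move=> R G I [Hrules _] [_ hacy] _ hcs [l [r [In [phi [hred Hiso]]]]].
have [_ _ [f0 [ps0 [hl [hcon _]]]] _ hvars] := Hrules l r In.
apply: cs_iso Hiso. exact: (fire_cs hl hcon hvars hacy hcs hred).
Qed.
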